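(* Let $A$ be an Archimedean semiprime $f$-algebra and let $A_b=\{a\in A: a^2\le\mu|a|\text{ for some }\mu\in(0,\infty)\}$. For $a\in A$, we have $a\in A_b$ if and only if $a^2\in A_b$.
   Context: An $f$-algebra is a real associative algebra that is a vector lattice with $A_+A_+\subseteq A_+$ and such that $a\wedge b=0$ implies $ac\wedge b=ca\wedge b=0$ for all $c\in A_+$; it is semiprime if $0$ is its only nilpotent element. *)

(* Defs.v *)
From HB Require Import structures.
From mathcomp Require Import all_boot all_order all_algebra.
From mathcomp Require Import reals.
Set Implicit Arguments. Unset Strict Implicit. Unset Printing Implicit Defensive.
Import Order.TTheory GRing.Theory Num.Theory.
Local Open Scope ring_scope.

Section FAlg.
Variables (R : realType) (V : lmodType R) (mul : V -> V -> V)
  (le : rel V) (meet join : V -> V -> V).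

Record f_algebra : Prop := {
  mulA : forall x y z, mul x (mul y z) = mul (mul x y) z;
  mulDl : forall x y z, mul (x + y) z = mul x z + mul y z;
  mulDr : forall x y z, mul x (y + z) = mul x y + mul x z;
  mulZl : forall (c : R) x y, mul (c *: x) y = c *: mul x y;
  mulZr : forall (c : R) x y, mul x (c *: y) = c *: mul x y;
  le_refl : forall x, le x x;
  le_anti : forall x y, le x y -> le y x -> x = y;
  le_trans : forall x y z, le x y -> le y z -> le x z;
  le_add : forall x y z, le x y -> le (x + z) (y + z);
  le_scale : forall (c : R) x y, 0 <= c -> le x y -> le (c *: x) (c *: y);
  join_ub : forall x y, le x (join x y) /\ le y (join x y);
  join_least : forall x y z, le x z -> le y z -> le (join x y) z;
  meet_lb : forall x y, le (meet x y) x /\ le (meet x y) y;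
  meet_greatest : forall x y z, le z x -> le z y -> le z (meet x y);
  mul_pos : forall a b, le 0 a -> le 0 b -> le 0 (mul a b);
  f_prop : forall a b c, meet a b = 0 -> le 0 c ->
             meet (mul a c) b = 0 /\ meet (mul c a) b = 0
}.

Definition archimedean : Prop :=
  forall x y, le 0 x -> (forall n : nat, le (x *+ n) y) -> x = 0.

(* mpow a n = a^(n+1) *)
Definition mpow (a : V) (n : nat) : V := iter n (mul a) a.

Definition semiprime : Prop := forall a n, mpow a n = 0 -> a = 0.

Definition absv (a : V) : V := join a (- a).

Definition in_Ab (a : V) : Prop :=
  exists mu : R, 0 < mu /\ le (mul a a) (mu *: absv a).

End FAlg.

(* Main.v *)
Require Import Defs.
From HB Require Import structures.
From mathcomp Require Import all_boot all_order all_algebra.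
From mathcomp Require Import reals.
From mathcomp Require Import lra.
Import Order.TTheory GRing.Theory Num.Theory.
Local Open Scope ring_scope.

Section S.
Variables (R : realType) (V : lmodType R) (mul : V -> V -> V)
  (le : rel V) (meet join : V -> V -> V).
Hypothesis HA : f_algebra mul le meet join.

Lemma lrefl x : le x x. Proof. exact: Defs.le_refl HA x. Qed.
Lemma lanti x y : le x y -> le y x -> x = y. Proof. move=> h1 h2; exact: (Defs.le_anti HA h1 h2). Qed.
Lemma ltr {x y z} : le x y -> le y z -> le x z. Proof. move=> h1 h2; exact: (Defs.le_trans HA h1 h2). Qed.

Lemma leD {x y} z : le x y -> le (x+z) (y+z).
Proof. by move=> h; exact: (Defs.le_add HA z h). Qed.

Lemma leD2 {x y u v} : le x y -> le u v -> le (x+u) (y+v).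
Proof.
move=> h1 h2; apply: (ltr (leD u h1)).
by rewrite (addrC y u) (addrC y v); apply: leD.
Qed.

Lemma le_sub {x y} : le x y -> le 0 (y - x).
Proof. by move=> h; have := leD (-x) h; rewrite subrr. Qed.

Lemma sub_le {x y} : le 0 (y - x) -> le x y.
Proof. by move=> h; have := leD x h; rewrite add0r subrK. Qed.

Lemma leN {x y} : le x y -> le (-y) (-x).
Proof.
move=> h; have := leD (-x - y) h.
by rewrite addrA subrr add0r addrCA subrr addr0.
Qed.

Lemma mul0l y : mul 0 y = 0.
Proof. by have := Defs.mulZl HA 0 0 y; rewrite !scale0r. Qed.

Lemma mul0r y : mul y 0 = 0.
Proof. by have := Defs.mulZr HA 0 y 0; rewrite !scale0r. Qed.

Lemma mulNl x y : mul (-x) y = - mul x y.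
Proof. by have := Defs.mulZl HA (-1) x y; rewrite !scaleN1r. Qed.

Lemma mulNr x y : mul x (-y) = - mul x y.
Proof. by have := Defs.mulZr HA (-1) x y; rewrite !scaleN1r. Qed.

Lemma mulBr x y z : mul x (y - z) = mul x y - mul x z.
Proof. by rewrite (Defs.mulDr HA) mulNr. Qed.

Lemma mulBl x y z : mul (y - z) x = mul y x - mul z x.
Proof. by rewrite (Defs.mulDl HA) mulNl. Qed.

Lemma mul_monol {c x y} : le 0 c -> le x y -> le (mul c x) (mul c y).
Proof.
move=> hc h; apply: sub_le; rewrite -mulBr; apply: (Defs.mul_pos HA) => //.
exact: le_sub.
Qed.

Lemma mul_monor {c x y} : le 0 c -> le x y -> le (mul x c) (mul y c).
Proof.
move=> hc h; apply: sub_le; rewrite -mulBl; apply: (Defs.mul_pos HA) => //.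
exact: le_sub.
Qed.

Lemma meetC x y : meet x y = meet y x.
Proof.
have H u v : le (meet u v) (meet v u).
  by have [h1 h2] := meet_lb HA u v; apply: (meet_greatest HA).
by apply: lanti; apply: H.
Qed.

Lemma meetxx x : meet x x = x.
Proof.
apply: lanti; first by case: (meet_lb HA x x).
by apply: (meet_greatest HA); apply: lrefl.
Qed.

Lemma meet0_pos {x y} : meet x y = 0 -> le 0 x /\ le 0 y.
Proof. by move=> h; have := meet_lb HA x y; rewrite h. Qed.

Lemma disj0 {x y} : meet x y = 0 -> mul x y = 0.
Proof.
move=> h; have [hx hy] := meet0_pos h.
have h1 := (f_prop HA (c:=y) h hy).1.
rewrite meetC in h1.
have h2 := (f_prop HA (c:=x) h1 hx).2.
by rewrite meetxx in h2.
Qed.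

Lemma scale_le0 (c : R) x : 0 < c -> le (c *: x) 0 -> le x 0.
Proof.
move=> hc h; have := Defs.le_scale HA (c:=c^-1) _ h; rewrite invr_ge0 (ltW hc) => /(_ isT).
by rewrite scaler0 scalerA mulVf ?gt_eqF // scale1r.
Qed.

Lemma half_sum (x : V) : (2^-1 : R) *: (x + x) = x.
Proof.
rewrite -{1 2}(scale1r x) -scalerDl scalerA.
have -> : ((2^-1 : R) * (1 + 1)) = 1 by rewrite mulVf // pnatr_eq0.
by rewrite scale1r.
Qed.

Definition pos x := join x 0.
Definition neg x := join (-x) 0.

Lemma pos_ge0 x : le 0 (pos x). Proof. by case: (join_ub HA x 0). Qed.
Lemma neg_ge0 x : le 0 (neg x). Proof. by case: (join_ub HA (-x) 0). Qed.

Lemma joinC x y : join x y = join y x.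
Proof.
have H u v : le (join u v) (join v u).
  by have [h1 h2] := join_ub HA v u; apply: (join_least HA).
by apply: lanti; apply: H.
Qed.

Lemma joinD x y z : join x y + z = join (x + z) (y + z).
Proof.
apply: lanti.
- have [h1 h2] := join_ub HA (x + z) (y + z).
  have L u : le (u + z) (join (x + z) (y + z)) -> le u (join (x + z) (y + z) - z).
    by move=> h; have := leD (-z) h; rewrite addrK.
  have := join_least HA (L _ h1) (L _ h2) => /(leD z); by rewrite subrK.
- have [h1 h2] := join_ub HA x y.
  by apply: (join_least HA); apply: leD.
Qed.

Lemma pos_neg x : pos x - neg x = x.
Proof.
have : neg x = pos x - x.
  by rewrite /pos joinD subrr add0r joinC.
by move=> ->; rewrite opprB addrC subrK.
Qed.

Lemma pos_neg_disj x : meet (pos x) (neg x) = 0.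
Proof.
set m := meet (pos x) (neg x).
have [h1 h2] := meet_lb HA (pos x) (neg x).
apply: lanti; last by apply: (meet_greatest HA); [apply: pos_ge0 | apply: neg_ge0].
have : le (pos x) (pos x - m).
  apply: (join_least HA).
  - rewrite -{1}(pos_neg x); apply: sub_le.
    by rewrite opprB addrC addrA subrK; apply: le_sub.
  - by apply: sub_le; rewrite subr0; apply: le_sub.
move/le_sub; rewrite addrC addrA (addrC (- pos x)) subrr add0r.
by move/leN; rewrite opprK oppr0.
Qed.

Lemma absv_pn x : absv join x = pos x + neg x.
Proof.
rewrite /absv; set J := join x (-x).
have [hx hnx] := join_ub HA x (-x).
apply: lanti.
- rewrite /J; apply: (join_least HA).
  + rewrite -{1}(pos_neg x); apply: leD2; first exact: lrefl.
    apply: (ltr _ (neg_ge0 x)); by have := leN (neg_ge0 x); rewrite oppr0.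
  + have -> : - x = neg x - pos x by rewrite -{1}(pos_neg x) opprB.
    rewrite addrC; apply: leD2; last exact: lrefl.
    apply: (ltr _ (pos_ge0 x)); by have := leN (pos_ge0 x); rewrite oppr0.
- have e : neg x = pos x - x.
    by rewrite /pos joinD subrr add0r joinC.
  set h := (2^-1 : R) *: (J + x).
  have hp : le (pos x) h.
    apply: (join_least HA).
    + rewrite -{1}(half_sum x); apply: (Defs.le_scale HA).
        by rewrite invr_ge0 ler0n.
      by rewrite addrC; apply: leD.
    + rewrite -(scaler0 _ (2^-1 : R)); apply: (Defs.le_scale HA).
        by rewrite invr_ge0 ler0n.
      by have := leD x hnx; rewrite addNr.
  have := leD2 hp hp; rewrite /h -scalerDr half_sum => hpp.
  rewrite e addrA; have := leD (-x) hpp; by rewrite addrK.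
Qed.

Lemma absv_pos x : le 0 x -> absv join x = x.
Proof.
move=> h; apply: lanti; last by case: (join_ub HA x (-x)).
apply: (join_least HA); first exact: lrefl.
apply: (ltr _ h); by have := leN h; rewrite oppr0.
Qed.

Lemma b_ge0 a : le 0 (absv join a).
Proof. by rewrite absv_pn; have := leD2 (pos_ge0 a) (neg_ge0 a); rewrite addr0. Qed.

Lemma sq_absv a : mul a a = mul (absv join a) (absv join a).
Proof.
have hpn := disj0 (pos_neg_disj a).
have hnp : mul (neg a) (pos a) = 0 by apply: disj0; rewrite meetC; apply: pos_neg_disj.
rewrite absv_pn -{1 2}(pos_neg a) !mulBl !mulBr !(Defs.mulDl HA) !(Defs.mulDr HA).
by rewrite hpn hnp !subr0 !addr0 !add0r opprK.
Qed.

Lemma main_sec (Hsp : semiprime mul) (a : V) :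
  in_Ab mul le join a <-> in_Ab mul le join (mul a a).
Proof.
have hb0 := b_ge0 a.
have hsq := sq_absv a.
set b := absv join a in hb0 hsq *.
have hbb : le 0 (mul b b) by apply: (Defs.mul_pos HA).
have haa : absv join (mul a a) = mul a a by apply: absv_pos => //; rewrite hsq.
rewrite /in_Ab haa -/b; split.
- case=> mu [mu0 H]; exists (mu * mu); split; first exact: mulr_gt0.
  have h1 : le (mul (mul a a) (mul a a)) (mu *: mul (mul a a) b).
    rewrite -(Defs.mulZr HA); apply: mul_monol => //; by rewrite hsq.
  have h2 : le (mul (mul a a) b) (mu *: mul a a).
    rewrite hsq -(Defs.mulA HA) -(Defs.mulZr HA); apply: mul_monol => //.
    by rewrite -hsq.
  apply: (ltr h1); rewrite -scalerA; apply: (Defs.le_scale HA) => //.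
  exact: ltW.
- case=> mu [mu0 H]; rewrite hsq in H.
  set nu := mu + 1.
  have nu0 : 0 < nu by rewrite /nu; apply: addr_gt0.
  exists nu; split => //.
  rewrite hsq.
  set x := mul b b - nu *: b.
  have hpq := disj0 (pos_neg_disj x).
  have hp0 := pos_ge0 x.
  set p := pos x in hpq hp0 *.
  have hpx : mul p x = mul p p.
    by rewrite -{1}(pos_neg x) -/p mulBr hpq subr0.
  set y := mul p (mul b b).
  have hpx2 : mul p x = y - nu *: mul p b by rewrite mulBr (Defs.mulZr HA).
  have hpp0 : le 0 (mul p p) by apply: (Defs.mul_pos HA).
  have s1 : le (nu *: mul p b) y by apply: sub_le; rewrite -hpx2 hpx.
  have s2 : le (nu *: y) (mul y b).
    have := mul_monor hb0 s1; rewrite (Defs.mulZl HA) -(Defs.mulA HA) //.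
  have s3 : le (nu *: mul y b) (mul y (mul b b)).
    have := mul_monor hb0 s2; rewrite (Defs.mulZl HA) -(Defs.mulA HA) //.
  have s4 : le (mul y (mul b b)) (mu *: y).
    rewrite /y -(Defs.mulA HA) -(Defs.mulZr HA); exact: mul_monol.
  have s5 : le ((nu * nu) *: y) (mu *: y).
    rewrite -scalerA; apply: (ltr _ (ltr s3 s4)).
    by apply: (Defs.le_scale HA) => //; exact: ltW.
  have y0 : y = 0.
    apply: lanti; last by apply: (Defs.mul_pos HA).
    apply: (@scale_le0 (nu * nu - mu)).
      rewrite /nu subr_gt0; nra.
    by have := leD (- (mu *: y)) s5; rewrite subrr scalerBl.
  have pp0 : mul p p = 0.
    apply: lanti => //.
    rewrite -hpx hpx2 y0 sub0r.
    have hpb : le 0 (nu *: mul p b).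
      rewrite -(scaler0 _ nu); apply: (Defs.le_scale HA); first exact: ltW.
      exact: (Defs.mul_pos HA).
    by have := leN hpb; rewrite oppr0.
  have p0 : p = 0 by exact: (Hsp p 1 pp0).
  have hx : le x 0.
    rewrite -(pos_neg x) -/p p0 sub0r.
    by have := leN (neg_ge0 x); rewrite oppr0.
  apply: sub_le; have := leN hx; by rewrite oppr0 /x opprB.
Qed.


End S.

Theorem lemma7 (R : realType) (V : lmodType R) (mul : V -> V -> V)
  (le : rel V) (meet join : V -> V -> V)
  (HA : f_algebra mul le meet join) (Harch : archimedean le)
  (Hsp : semiprime mul) (a : V) :
  in_Ab mul le join a <-> in_Ab mul le join (mul a a).
Proof. exact: (@main_sec R V mul le meet join HA Hsp a). Qed.
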